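(* For every positive integer $k$ there is a deterministic algorithm in the ordinal query model that, on every instance $(X,d)$ with $|X|=n\ge k$ and every profile $P$ consistent with $d$, makes exactly $\frac{k^2-k}{2}$ distance queries and outputs a set $C\subseteq X$ with $|C|\le k$ such that $\max_{x\in X} d(x,C)\le 2\cdot \mathrm{OPT}^{\mathrm{center}}_k(X,d)$. In other words, it has distortion $2$ for $k$-center.
   Context: Ordinal query model: $(X,d)$ is a finite metric space with $|X|=n$. Every point $x\in X$ reports a ranking $\pi_x$ of all points of $X$ such that $y$ is ranked above $y'$ only if $d(x,y)\le d(x,y')$ (ties broken arbitrarily); the collection $P=\{\pi_x\}_{x\in X}$ is a profile consistent with $d$. An algorithm receives $X$, $k$ and $P$ for free. Its only other access to $d$ is by querying the exact value $d(x,y)$ for pairs of its choice; each such value costs one query. For $C\subseteq X$ write $d(x,C)=\min_{c\in C}d(x,c)$. The $k$-center cost of $C$ is $\max_{x\in X}d(x,C)$, and $\mathrm{OPT}^{\mathrm{center}}_k(X,d)=\min_{C\subseteq X,|C|=k}\max_{x\in X}d(x,C)$. An algorithm has distortion $D$ if for every metric space and every consistent profile, the cost of its output is at most $D$ times the optimal cost. *)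

(* Defs.v *)
From HB Require Import structures.
From mathcomp Require Import all_boot all_order all_algebra.
From mathcomp Require Import reals constructive_ereal.
Set Implicit Arguments. Unset Strict Implicit. Unset Printing Implicit Defensive.
Import Order.TTheory GRing.Theory Num.Theory.
Local Open Scope ring_scope.
Local Open Scope ereal_scope.

Section Defs.
Variable R : realType.

Definition is_metric (X : finType) (d : X -> X -> R) : Prop :=
  [/\ forall x y, (0 <= d x y)%R,
      forall x y, d x y = 0%R <-> x = y,
      forall x y, d x y = d y x &
      forall x y z, (d x z <= d x y + d y z)%R].

(* A profile assigns to each point x a ranking (a list of all points of X,
   each exactly once, best first). *)
Definition profile (X : finType) := X -> seq X.

Definition consistent (X : finType) (d : X -> X -> R) (P : profile X) : Prop :=
  forall x, perm_eq (P x) (enum X) /\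
            pairwise (fun y y' => (d x y <= d x y')%R) (P x).

(* Deterministic adaptive query algorithm: a query tree. A node either
   outputs a set of centers, or queries the exact value d(x,y) and continues
   depending on the answer. *)
Inductive qtree (X : finType) : Type :=
  | QRet of {set X}
  | QAsk of X & X & (R -> qtree X).

Fixpoint run (X : finType) (d : X -> X -> R) (t : qtree X) : {set X} * nat :=
  match t with
  | QRet C => (C, 0%N)
  | QAsk x y f => let r := run d (f (d x y)) in (r.1, r.2.+1)
  end.

Definition dist_set (X : finType) (d : X -> X -> R) (x : X) (C : {set X}) : \bar R :=
  \big[mine/+oo]_(c in C) (d x c)%:E.

Definition center_cost (X : finType) (d : X -> X -> R) (C : {set X}) : \bar R :=
  \big[maxe/-oo]_(x : X) dist_set d x C.

Definition OPT_center (X : finType) (d : X -> X -> R) (k : nat) : \bar R :=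
  \big[mine/+oo]_(C : {set X} | #|C| == k) center_cost d C.

End Defs.

(* Main.v *)
Require Import Defs.
From HB Require Import structures.
From mathcomp Require Import all_boot all_order all_algebra.
From mathcomp Require Import reals constructive_ereal.
From mathcomp Require Import zify lra.
Import Order.TTheory GRing.Theory Num.Theory.
Set Implicit Arguments. Unset Strict Implicit. Unset Printing Implicit Defensive.

Section Alg.
Variables (R : realType) (X : finType) (P : profile X).
Local Open Scope ring_scope.

Definition nc (s : seq X) (x : X) : X := head x [seq y <- P x | y \in s].
Definition fc (s : seq X) (c : X) : X := last c [seq x <- P c | nc s x == c].

Fixpoint ask_all (l : seq (X * X)) (K : seq R -> qtree R X) : qtree R X :=
  match l with
  | [::] => K [::]
  | (a, b) :: l' => QAsk a b (fun r => ask_all l' (fun rs => K (r :: rs)))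
  end.

Definition choosec (s : seq X) (rs : seq R) (x0 : X) : X :=
  Order.arg_max (head x0 s) (fun c => c \in s) (fun c => nth 0 rs (index c s)).

Fixpoint alg (n : nat) (s : seq X) (x0 : X) : qtree R X :=
  match n with
  | 0%N => @QRet R X [set c in s]
  | n'.+1 => ask_all [seq (c, fc s c) | c <- s]
      (fun rs => alg n' (rcons s (fc s (choosec s rs x0))) x0)
  end.

Lemma run_ask_all (d : X -> X -> R) l K :
  run d (ask_all l K) =
  ((run d (K [seq d p.1 p.2 | p <- l])).1, ((run d (K [seq d p.1 p.2 | p <- l])).2 + size l)%N).
Proof.
elim: l K => [|[a b] l IH] K /=; first by case: (run d (K [::])) => ? ?; rewrite addn0.
by rewrite IH addnS.
Qed.

Lemma run_alg_count (d : X -> X -> R) n s x0 :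
  ((run d (alg n s x0)).2 * 2 = n * (n + 2 * size s - 1))%N.
Proof.
elim: n s => [|n IH] s //=.
rewrite run_ask_all /= size_map mulnDl IH size_rcons.
nia.
Qed.


Lemma pairwise_head (r : rel X) y l x : pairwise r (y :: l) -> x \in y :: l -> x = y \/ r y x.
Proof.
rewrite pairwise_cons => /andP[/allP ha _]; rewrite inE => /orP[/eqP->|xl]; first by left.
by right; apply: ha.
Qed.

Lemma pairwise_last (r : rel X) l x x0 : pairwise r l -> x \in l -> x = last x0 l \/ r x (last x0 l).
Proof.
elim: l x0 => [//|y l IH] x0; rewrite pairwise_cons => /andP[/allP ha pl].
rewrite [last _ _]/= inE => /orP[/eqP->|xl]; last exact: IH.
have := mem_last y l; rewrite inE => /orP[/eqP->|yl]; first by left.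
by right; apply: ha.
Qed.

Section Proofs.
Variables (d : X -> X -> R) (hm : is_metric d) (hc : consistent d P).

Lemma d_sym x y : d x y = d y x.
Proof. by case: hm. Qed.
Lemma d_ge0 x y : 0 <= d x y.
Proof. by case: hm. Qed.
Lemma d_xx x : d x x = 0.
Proof. by case: hm => _ h _ _; exact: (proj2 (h x x) erefl). Qed.
Lemma d_eq0 x y : d x y = 0 -> x = y.
Proof. by case: hm => _ h _ _; exact: (proj1 (h x y)). Qed.
Lemma d_tri x y z : d x z <= d x y + d y z.
Proof. by case: hm. Qed.

Lemma memP x y : y \in P x.
Proof. by case: (hc x) => /perm_mem -> _; rewrite mem_enum. Qed.

Lemma nc_mem s x : s != [::] -> nc s x \in s.
Proof.
move=> sn; rewrite /nc.
case E: [seq y <- P x | y \in s] => [|y l] /=.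
  case: s sn E => [//|c s] _ E.
  have : c \in [seq y <- P x | y \in c :: s] by rewrite mem_filter mem_head memP.
  by rewrite E.
have : y \in [seq y <- P x | y \in s] by rewrite E mem_head.
by rewrite mem_filter => /andP[].
Qed.

Lemma nc_min s x c : c \in s -> d x (nc s x) <= d x c.
Proof.
move=> cs; rewrite /nc.
have cf : c \in [seq y <- P x | y \in s] by rewrite mem_filter cs memP.
have pw : pairwise (fun y y' => d x y <= d x y') [seq y <- P x | y \in s].
  by apply: pairwise_filter; case: (hc x).
move: cf pw; case: [seq y <- P x | y \in s] => [//|y l] /= cf pw.
by case: (pairwise_head pw cf) => [->|//]; rewrite lexx.
Qed.

Lemma fc_far s c x : nc s x = c -> d c x <= d c (fc s c).
Proof.
move=> ncx; rewrite /fc.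
have xf : x \in [seq y <- P c | nc s y == c] by rewrite mem_filter ncx eqxx memP.
have pw : pairwise (fun y y' => d c y <= d c y') [seq y <- P c | nc s y == c].
  by apply: pairwise_filter; case: (hc c).
by case: (pairwise_last c pw xf) => [<-|//]; rewrite lexx.
Qed.

Lemma fc_sep s c c' : c' \in s -> d c (fc s c) <= d (fc s c) c'.
Proof.
move=> cs; have := mem_last c [seq y <- P c | nc s y == c]; rewrite -/(fc s c).
rewrite inE => /orP[/eqP->|]; first by rewrite d_xx d_ge0.
rewrite mem_filter => /andP[/eqP ncf _].
rewrite d_sym; have := nc_min (fc s c) cs; by rewrite ncf.
Qed.


Definition q s c := d c (fc s c).

Lemma choose_spec s x0 : s != [::] ->
  let cs := choosec s [seq q s c | c <- s] x0 in
  cs \in s /\ forall c, c \in s -> q s c <= q s cs.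
Proof.
move=> sn /=; rewrite /choosec.
have h0 : head x0 s \in s by case: s sn => // c s _; rewrite mem_head.
case: (arg_maxP _ h0) => i iin hmax; split=> // c cs.
have e : forall c, c \in s -> nth 0 [seq q s c | c <- s] (index c s) = q s c.
  by move=> c' c's; rewrite (nth_map x0) ?index_mem // nth_index.
by rewrite -(e _ cs) -(e _ iin); apply: hmax.
Qed.

Definition Inv s := s != [::] /\ exists r : R,
  [/\ (forall x, exists2 c, c \in s & d x c <= r),
      (forall a b, a \in s -> b \in s -> a != b -> r <= d a b) &
      (uniq s \/ r = 0)].

Lemma Inv_step s x0 : Inv s ->
  Inv (rcons s (fc s (choosec s [seq q s c | c <- s] x0))).
Proof.
move=> [sn [r [hcov hsep hu]]].
have [csin csmax] := choose_spec x0 sn.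
set cs := choosec _ _ _ in csin csmax *.
set p := fc s cs.
split; first by rewrite -size_eq0 size_rcons.
exists (q s cs).
have hp : forall c, c \in s -> q s cs <= d p c by move=> c cin; apply: fc_sep.
have hr : q s cs <= r.
  by have [c cin dc] := hcov p; apply: le_trans (hp _ cin) dc.
split.
- move=> x; exists (nc s x); first by rewrite mem_rcons inE nc_mem ?orbT.
  apply: le_trans (csmax _ (nc_mem x sn)).
  by rewrite d_sym; apply: fc_far.
- move=> a b; rewrite !mem_rcons !inE => /orP[/eqP->|ain] /orP[/eqP->|bin].
  + by rewrite eqxx.
  + by move=> _; apply: hp.
  + by move=> _; rewrite d_sym; apply: hp.
  + by move=> ab; apply: le_trans hr (hsep _ _ ain bin ab).
- have [->|qn] := eqVneq (q s cs) 0; first by right.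
  left; rewrite rcons_uniq; apply/andP; split.
    apply/negP => pin; have := hp _ pin; rewrite d_xx => hle.
    by move: qn; rewrite eq_le hle /q d_ge0.
  case: hu => // r0; move: qn; rewrite eq_le /q d_ge0 andbT -r0 => /negP; case.
  by move: hr; rewrite /q.
Qed.

Lemma alg_inv n s x0 : Inv s ->
  exists s', [/\ Inv s', (run d (alg n s x0)).1 = [set c in s'] & size s' = (n + size s)%N].
Proof.
elim: n s => [|n IH] s hs /=; first by exists s.
rewrite run_ask_all /= -map_comp.
have [s' [h1 h2 h3]] := IH _ (Inv_step x0 hs).
by exists s'; split => //; rewrite h3 size_rcons addnS.
Qed.


Lemma near_pt (O : {set X}) y : O != set0 ->
  exists2 o, o \in O & ((d y o)%:E <= center_cost d O)%E.
Proof.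
case/set0Pn=> o0 o0in.
have [i iin e] := @eq_bigmin _ _ X (+oo)%E o0 (fun c => c \in O) (fun c => (d y c)%:E) o0in
  (fun i _ => leey _).
exists i => //; rewrite -e.
exact: (@le_bigmax _ _ X (-oo)%E (fun x => dist_set d x O) y).
Qed.

Lemma pig (L : seq X) (rho : R) (O : {set X}) : (#|O| < size L)%N -> O != set0 ->
  (0 < rho -> uniq L) ->
  (forall a b, a \in L -> b \in L -> a != b -> rho <= d a b) ->
  ((rho / 2)%:E <= center_cost d O)%E.
Proof.
move=> hsz hO hu hsep.
have [o0 o0in] := set0Pn _ hO.
have [o1 _ h1] := near_pt o0 hO.
case E: (center_cost d O) => [c0| |]; [|exact: leey|by move: h1; rewrite E].
rewrite lee_fin.
have hnear : forall y, exists2 o, o \in O & d y o <= c0.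
  by move=> y; have [o oin] := near_pt y hO; rewrite E lee_fin; exists o.
have [rle0|rgt0] := leP rho 0.
  have [o _ ho] := hnear o0; have := d_ge0 o0 o; lra.
pose f y := odflt y [pick o in O | d y o <= c0].
have hf : forall y, f y \in O /\ d y (f y) <= c0.
  move=> y; rewrite /f; case: pickP => [o /andP[oin ho]|hn] //=.
  by have [o oin ho] := hnear y; move: (hn o); rewrite oin ho.
have [hex|hn] := boolP [exists a, exists b, [&& a \in L, b \in L, a != b & f a == f b]];
  last first.
  move/negP: hn => hn.
  have inj : {in L &, injective f}.
    move=> a b ain bin fab; apply/eqP/negPn/negP => ab.
    apply: hn; apply/existsP; exists a; apply/existsP; exists b.
    by rewrite ain bin ab fab eqxx.
  have := card_in_imset inj; move/card_uniqP: (hu rgt0) => ->.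
  have : (#|[set f x | x in L]| <= #|O|)%N.
    apply: subset_leq_card; apply/subsetP => _ /imsetP [x _ ->]; exact: (hf x).1.
  move=> h1' h2'; move: hsz; rewrite -h2'; move: h1'; by move=> u v; have := leq_ltn_trans u v; rewrite ltnn.
case/existsP: hex => a /existsP [b /and4P [ain bin ab /eqP fab]].
have := hsep _ _ ain bin ab; have := d_tri a (f a) b.
have [_ ha] := hf a; have [_ hb] := hf b.
rewrite fab in ha *; rewrite [d (f b) b]d_sym; lra.
Qed.

Lemma final s k : Inv s -> size s = k ->
  (center_cost d [set c in s] <= 2%:E * OPT_center d k)%E.
Proof.
case=> sn [r [hcov hsep hu]] hsz.
have [c0 c0s] : exists c0, c0 \in s by case: s sn {hcov hsep hu hsz} => // c s _; exists c; rewrite mem_head.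
pose g x := d x (nc s x).
case: (@arg_maxP _ _ X c0 xpredT g isT) => p _ hp.
set rt := g p.
have hrp : forall c, c \in s -> rt <= d p c by move=> c cin; apply: nc_min.
have hrr : rt <= r by have [c cin dc] := hcov p; apply: le_trans (hrp _ cin) dc.
have hcost : (center_cost d [set c in s] <= rt%:E)%E.
  apply: bigmax_le => [|x _]; first exact: leNye.
  apply: (@bigmin_inf _ _ X _ (nc s x)); first by rewrite inE nc_mem.
  by rewrite lee_fin; apply: (hp x).
apply: le_trans hcost _.
have -> : rt%:E = (2%:E * (rt / 2)%:E)%E by rewrite -EFinM; congr (_%:E); lra.
apply: lee_wpmul2l; first by rewrite lee_fin.
apply: le_bigmin => [|C /eqP hC]; first exact: leey.
apply: (pig (L := p :: s)).
- by rewrite hC /= hsz.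
- apply/negP => /eqP C0; move: hC; rewrite C0 cards0 => k0.
  by move: hsz sn; rewrite -k0 => /eqP; rewrite size_eq0 => ->.
- move=> rpos; rewrite cons_uniq; apply/andP; split.
    apply/negP => pin; have := hrp _ pin; rewrite d_xx => h0.
    by move: rpos; rewrite ltNge h0.
  case: hu => // r0; by move: rpos; rewrite ltNge -r0 hrr.
- move=> a b; rewrite !inE => /orP[/eqP->|ain] /orP[/eqP->|bin].
  + by rewrite eqxx.
  + by move=> _; apply: hrp.
  + by move=> _; rewrite d_sym; apply: hrp.
  + by move=> ab; apply: le_trans hrr (hsep _ _ ain bin ab).
Qed.

End Proofs.
End Alg.

Theorem mainTheorem1 (R : realType) (k : nat) (hk : (0 < k)%N) :
  exists A : forall X : finType, profile X -> qtree R X,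
    forall (X : finType) (d : X -> X -> R) (P : profile X),
      (k <= #|X|)%N -> is_metric d -> consistent d P ->
      let res := run d (A X P) in
      [/\ res.2 = ((k * k - k) %/ 2)%N,
          (#|res.1| <= k)%N &
          (center_cost d res.1 <= 2%:E * OPT_center d k)%E].
Proof.
exists (fun (X : finType) (P : profile X) => match [pick x : X] with
                   | None => @QRet R X set0
                   | Some x0 => @alg R X P k.-1 [:: x0] x0 end).
move=> X d P hkX hm hc /=.
case: pickP => [x0 _|hn]; last first.
  by move: hkX; rewrite (eq_card0 hn) leqn0 => /eqP k0; move: hk; rewrite k0.
have hinv : Inv d [:: x0].
  split => //.
  case: (@arg_maxP _ _ X x0 xpredT (fun x => d x x0) isT) => m _ hmx.
  exists (d m x0); split.
  - by move=> x; exists x0; [rewrite mem_head | apply: hmx].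
  - by move=> a b; rewrite !inE => /eqP-> /eqP->; rewrite eqxx.
  - by left.
have [s' [hi h1 h2]] := alg_inv hm hc (k.-1) x0 hinv.
have hcnt := run_alg_count P d (k.-1) [:: x0] x0.
rewrite h1; split.
- have -> : (k * k - k = (run d (alg R P k.-1 [:: x0] x0)).2 * 2)%N.
    rewrite hcnt /=; move: (k.-1) (prednK hk) => n <-; nia.
  by rewrite mulnK.
- by rewrite cardsE (leq_trans (card_size _)) // h2 /= addn1 prednK.
- apply: final hm hc _ _ hi _; by rewrite h2 /= addn1 prednK.
Qed.
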